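(* If $\sum_{i\in I}u_i$ is defined, then for any family $(v_i)_{i\in I}$ of elements of $U$, $\sum_{i\in I}u_i\cdot v_i$ is defined.
   Context: $\mathcal A=\langle U,+,\cdot,\mathbf 0,\mathbf 1\rangle$ is a partial semiring ($\langle U,+,\mathbf 0\rangle$ a commutative monoid with $+$ possibly partial; $\langle U,\cdot,\mathbf 1\rangle$ a monoid with total $\cdot$; two-sided distributivity; $\mathbf 0$ annihilates), naturally ordered ($u\le v$ iff $\exists w.\,u+w=v$ is a partial order), Scott continuous ($+$ and $\cdot$ preserve suprema of directed sets in each argument), and has a top element $\top$ with $\top\ge u$ for all $u\in U$. For an indexed family, $\sum_{i\in I}u_i$ is the supremum of all finite sums $u_{i_1}+\dots+u_{i_n}$ over finite $\{i_1,\dots,i_n\}\subseteq I$. *)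

(* Defs.v *)
From Stdlib Require Import List.
Import ListNotations.

Definition obind {A B : Type} (f : A -> option B) (o : option A) : option B :=
  match o with Some a => f a | None => None end.

Section Order.
Variable U : Type.
Variable le : U -> U -> Prop.
Definition upper_bound (D : U -> Prop) (s : U) : Prop := forall d, D d -> le d s.
Definition is_sup (D : U -> Prop) (s : U) : Prop :=
  upper_bound D s /\ forall t, upper_bound D t -> le s t.
Definition directed (D : U -> Prop) : Prop :=
  (exists d, D d) /\
  forall x y, D x -> D y -> exists z, D z /\ le x z /\ le y z.
End Order.

Record PSemiring := {
  car :> Type;
  add : car -> car -> option car;
  mul : car -> car -> car;
  zero : car;
  one : car;
  (* <U,+,0> commutative (partial) monoid, Kleene-style associativity *)
  add_comm : forall a b, add a b = add b a;
  add_assoc : forall a b c,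
    obind (fun ab => add ab c) (add a b) = obind (fun bc => add a bc) (add b c);
  add_0l : forall a, add zero a = Some a;
  mul_assoc : forall a b c, mul a (mul b c) = mul (mul a b) c;
  mul_1l : forall a, mul one a = a;
  mul_1r : forall a, mul a one = a;
  mul_addr : forall c a b s, add a b = Some s -> add (mul c a) (mul c b) = Some (mul c s);
  mul_addl : forall c a b s, add a b = Some s -> add (mul a c) (mul b c) = Some (mul s c);
  mul_0l : forall a, mul zero a = zero;
  mul_0r : forall a, mul a zero = zero;
  (* natural order is a partial order (antisymmetry; refl/trans are automatic) *)
  nat_antisym : forall a b,
    (exists w, add a w = Some b) -> (exists w, add b w = Some a) -> a = b;
  (* Scott continuity: directed sets have suprema, preserved by + and . in each argument *)
  dcpo : forall D, directed _ (fun a b => exists w, add a w = Some b) D ->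
    exists s, is_sup _ (fun a b => exists w, add a w = Some b) D s;
  add_cont : forall D s a t,
    directed _ (fun a b => exists w, add a w = Some b) D ->
    is_sup _ (fun a b => exists w, add a w = Some b) D s ->
    add a s = Some t ->
    is_sup _ (fun a b => exists w, add a w = Some b)
      (fun y => exists d, D d /\ add a d = Some y) t;
  mul_contl : forall D s a,
    directed _ (fun a b => exists w, add a w = Some b) D ->
    is_sup _ (fun a b => exists w, add a w = Some b) D s ->
    is_sup _ (fun a b => exists w, add a w = Some b)
      (fun y => exists d, D d /\ y = mul a d) (mul a s);
  mul_contr : forall D s a,
    directed _ (fun a b => exists w, add a w = Some b) D ->
    is_sup _ (fun a b => exists w, add a w = Some b) D s ->
    is_sup _ (fun a b => exists w, add a w = Some b)
      (fun y => exists d, D d /\ y = mul d a) (mul s a);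
  top_ex : exists t, forall u, exists w, add u w = Some t
}.

Arguments add {_}. Arguments mul {_}. Arguments zero {_}.

Definition nle {A : PSemiring} (a b : A) : Prop := exists w, add a w = Some b.

(* finite sum u_{i1} + ... + u_{in} over a list of indices (None = undefined) *)
Fixpoint fsum {A : PSemiring} {I : Type} (u : I -> A) (l : list I) : option A :=
  match l with
  | [] => Some zero
  | i :: l' => obind (fun s => add (u i) s) (fsum u l')
  end.

Definition finite_sums {A : PSemiring} {I : Type} (u : I -> A) (x : A) : Prop :=
  exists l : list I, NoDup l /\ fsum u l = Some x.

(* \sum_{i in I} u_i is defined: every finite sum is defined, and the set of
   finite sums has a supremum (which is the value of the sum). *)
Definition sum_defined {A : PSemiring} {I : Type} (u : I -> A) : Prop :=
  (forall l : list I, NoDup l -> exists x, fsum u l = Some x) /\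
  exists s, is_sup A nle (finite_sums u) s.

(* Main.v *)
Require Import Defs.
From Stdlib Require Import List Permutation Classical.
Import ListNotations.

Section S.
Variable A : PSemiring.

Lemma nle_trans (a b c : A) : nle a b -> nle b c -> nle a c.
Proof.
  intros [w1 H1] [w2 H2].
  pose proof (add_assoc A a w1 w2) as E. rewrite H1 in E; simpl in E.
  rewrite H2 in E. destruct (add w1 w2) as [w|] eqn:Ew; simpl in E; [|discriminate].
  exists w; auto.
Qed.

Lemma le_add (a b c t : A) : nle a b -> add b c = Some t ->
  exists s, add a c = Some s /\ nle s t.
Proof.
  intros [w Hw] H.
  pose proof (add_assoc A w a c) as E. rewrite (add_comm A w a), Hw in E; simpl in E.
  rewrite H in E. destruct (add a c) as [s|] eqn:Es; simpl in E; [|discriminate].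
  exists s; split; auto. exists w. rewrite add_comm; auto.
Qed.

Lemma fsum_mono {I : Type} (a b : I -> A) :
  (forall i, nle (a i) (b i)) -> forall l y, fsum b l = Some y ->
  exists x, fsum a l = Some x /\ nle x y.
Proof.
  intros Hab l; induction l as [|i l IH]; simpl; intros y Hy.
  - inversion Hy; subst. exists zero; split; auto. exists zero. apply add_0l.
  - destruct (fsum b l) as [y'|]; simpl in Hy; [|discriminate].
    destruct (IH y' eq_refl) as [x [Hx Hle]]. rewrite Hx; simpl.
    destruct (le_add _ _ _ _ (Hab i) Hy) as [s1 [H1 L1]].
    rewrite add_comm in H1.
    destruct (le_add _ _ _ _ Hle H1) as [s2 [H2 L2]].
    rewrite add_comm in H2. exists s2; split; auto. eapply nle_trans; eauto.
Qed.

Lemma fsum_perm {I : Type} (a : I -> A) l l' : Permutation l l' -> fsum a l = fsum a l'.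
Proof.
  induction 1; simpl.
  - auto.
  - rewrite IHPermutation; auto.
  - destruct (fsum a l) as [s|]; simpl; auto.
    pose proof (add_assoc A (a x) (a y) s) as E1.
    pose proof (add_assoc A (a y) (a x) s) as E2.
    rewrite <- E1, <- E2, add_comm. auto.
  - congruence.
Qed.

Lemma fsum_prefix {I : Type} (a : I -> A) l1 l2 z :
  fsum a (l1 ++ l2) = Some z -> exists x, fsum a l1 = Some x /\ nle x z.
Proof.
  revert z; induction l1 as [|i l1 IH]; simpl; intros z H.
  - exists zero; split; auto. exists z. apply add_0l.
  - destruct (fsum a (l1 ++ l2)) as [s|]; simpl in H; [|discriminate].
    destruct (IH s eq_refl) as [x [Hx [w Hw]]]. rewrite Hx; simpl.
    pose proof (add_assoc A (a i) x w) as E. rewrite Hw in E; simpl in E; rewrite H in E.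
    destruct (add (a i) x) as [t|]; simpl in E; [|discriminate].
    exists t; split; auto. exists w; auto.
Qed.

Lemma sub_perm {I : Type} (m l : list I) : NoDup m -> incl m l ->
  exists r, Permutation l (m ++ r).
Proof.
  revert l; induction m as [|a m IH]; intros l Hn Hi.
  - exists l; simpl; auto.
  - apply NoDup_cons_iff in Hn as [Ha Hn].
    destruct (IH l Hn (fun x h => Hi x (or_intror h))) as [r Hr].
    assert (In a r) as Ar.
    { assert (In a (m ++ r)) as H by (eapply Permutation_in; eauto; apply Hi; left; auto).
      apply in_app_or in H as [H|H]; tauto. }
    apply in_split in Ar as [r1 [r2 ->]].
    exists (r1 ++ r2). eapply perm_trans; [exact Hr|].
    rewrite app_assoc. simpl. rewrite (app_assoc m r1 r2).
    apply Permutation_sym, Permutation_middle.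
Qed.

Lemma union_list {I : Type} (l1 l2 : list I) : NoDup l1 ->
  exists l3, NoDup l3 /\ incl l1 l3 /\ incl l2 l3.
Proof.
  intros H1; induction l2 as [|a l2 IH].
  - exists l1; repeat split; auto using incl_refl. intros x [].
  - destruct IH as [l3 [N [I1 I2]]].
    destruct (classic (In a l3)).
    + exists l3; repeat split; auto. intros x [<-|h]; auto.
    + exists (a :: l3); repeat split.
      * constructor; auto.
      * intros x h; right; auto.
      * intros x [<-|h]; [left; auto|right; auto].
Qed.

Lemma fsum_mulr {I : Type} (u : I -> A) c l s : fsum u l = Some s ->
  fsum (fun i => mul (u i) c) l = Some (mul s c).
Proof.
  revert s; induction l as [|i l IH]; simpl; intros s H.
  - inversion H; subst. rewrite mul_0l; auto.
  - destruct (fsum u l) as [t|]; simpl in H; [|discriminate].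
    rewrite (IH t eq_refl); simpl. eapply mul_addl; eauto.
Qed.

End S.

Theorem lemmaA2 (A : PSemiring) (I : Type) (u : I -> A) :
  sum_defined u -> forall v : I -> A, sum_defined (fun i => mul (u i) (v i)).
Proof.
  intros [Hdef _] v.
  destruct (top_ex A) as [T HT].
  assert (Hle : forall i, nle (mul (u i) (v i)) (mul (u i) T)).
  { intros i. destruct (HT (v i)) as [w Hw]. exists (mul (u i) w).
    eapply mul_addr; eauto. }
  assert (Hd : forall l, NoDup l -> exists x, fsum (fun i => mul (u i) (v i)) l = Some x).
  { intros l Hl. destruct (Hdef l Hl) as [s Hs].
    destruct (fsum_mono A _ _ Hle l _ (fsum_mulr A u T l s Hs)) as [x [Hx _]].
    eauto. }
  split; auto.
  apply dcpo. split.
  - exists zero. exists []. split; [constructor|reflexivity].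
  - intros x y [l1 [N1 E1]] [l2 [N2 E2]].
    destruct (union_list l1 l2 N1) as [l3 [N3 [I1 I2]]].
    destruct (Hd l3 N3) as [z Hz].
    exists z; split; [exists l3; auto|].
    destruct (sub_perm l1 l3 N1 I1) as [r1 P1].
    destruct (sub_perm l2 l3 N2 I2) as [r2 P2].
    pose proof Hz as Hz2.
    rewrite (fsum_perm A _ _ _ P1) in Hz.
    destruct (fsum_prefix A _ _ _ _ Hz) as [x' [Hx' L1]].
    rewrite (fsum_perm A _ _ _ P2) in Hz2.
    destruct (fsum_prefix A _ _ _ _ Hz2) as [y' [Hy' L2]].
    rewrite Hx' in E1; rewrite Hy' in E2. injection E1 as <-. injection E2 as <-. split; assumption.
Qed.
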